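(* Let $r\ge1$ and let $A,B$ be integers with $0\le B<A\le r$. For all real numbers $v_0,v_1,\dots,v_r$, $$\sum_{i=B}^{A}\ \prod_{\alpha=0}^{i-1}(v_A-v_\alpha)\prod_{\beta=i+1}^{r}(v_B-v_\beta)=0,$$ where an empty product (e.g. $\prod_{\alpha=0}^{-1}$ or $\prod_{\beta=r+1}^{r}$) equals $1$. *)

(* Defs.v *)
From mathcomp Require Import all_boot all_order all_algebra.
From mathcomp Require Export reals.

(* Main.v *)
Require Import Defs.
From HB Require Import structures.
From mathcomp Require Import all_boot all_order all_algebra.
From mathcomp Require Import reals.
From mathcomp Require Import ring.
Import GRing.Theory Num.Theory.
Local Open Scope ring_scope.

Lemma prod_has0 (R : comRingType) (m n j : nat) (F : nat -> R) :
  (m <= j < n)%N -> F j = 0 -> \prod_(m <= k < n) F k = 0.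
Proof.
move=> hj F0.
rewrite (bigD1_seq j) /=; last by rewrite /index_iota iota_uniq.
  by rewrite F0 mul0r.
by rewrite mem_index_iota.
Qed.

Theorem mainTheorem3 (R : realType) (r A B : nat) (v : nat -> R)
  (hr : (1 <= r)%N) (hBA : (B < A)%N) (hAr : (A <= r)%N) :
  \sum_(B <= i < A.+1)
     ((\prod_(0 <= a < i) (v A - v a)) *
      (\prod_(i.+1 <= b < r.+1) (v B - v b))) = 0.
Proof.
have [eAB|nAB] := eqVneq (v A) (v B).
  rewrite big1_seq // => i; rewrite mem_index_iota => /andP [h1 h2].
  case: (ltnP B i) => hi.
    by rewrite (@prod_has0 _ 0 i B) ?mul0r ?hi // eAB subrr.
  rewrite (@prod_has0 _ i.+1 r.+1 A) ?mulr0 //.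
    by rewrite ltnS hAr andbT; apply: leq_ltn_trans hi hBA.
  by rewrite eAB subrr.
pose S i := (\prod_(0 <= a < i) (v A - v a)) *
            (\prod_(i <= b < r.+1) (v B - v b)).
have key : (v A - v B) * \sum_(B <= i < A.+1)
     ((\prod_(0 <= a < i) (v A - v a)) *
      (\prod_(i.+1 <= b < r.+1) (v B - v b))) = S A.+1 - S B.
  rewrite mulr_sumr; apply: telescope_sumr_eq; first by apply: leq_trans (ltnW hBA) (leqnSn A).
  move=> k /andP [_ hk].
  rewrite /S (@big_nat_recr _ _ _ k 0) // (@big_ltn _ _ _ k r.+1); last first.
    by rewrite ltnS; apply: leq_trans hAr.
  rewrite /=; set P := \prod_(0 <= a < k) _; set Q := \prod_(k.+1 <= b < r.+1) _.
  ring.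
have SA : S A.+1 = 0.
  by rewrite /S (@prod_has0 _ 0 A.+1 A) ?mul0r ?subrr // ltnSn.
have SB : S B = 0.
  rewrite /S (@prod_has0 _ B r.+1 B) ?mulr0 ?subrr // leqnn ltnS.
  by apply: leq_trans (ltnW hBA) hAr.
move: key; rewrite SA SB subrr => /eqP; rewrite mulf_eq0 subr_eq0 (negbTE nAB).
by move/eqP.
Qed.
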